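(* Let $n\ge1$, let $A\in\mathbb{C}^{2n\times 2n}$ be Hamiltonian, and let $f$ and $\operatorname{grad} f$ be as in the context. Then for every unitary symplectic $Z\in\mathbb{C}^{2n\times 2n}$ there exist a symplectic rotation $R(i,j,\phi,\alpha)$ of one of the three types (R1), (R2), (R3) (with admissible pivot pair $(i,j)$ for that type) and an angle $\alpha$ such that $$\big|\langle \operatorname{grad} f(Z),\, Z\dot R(i,j,0,\alpha)\rangle_{\mathbb{R}}\big|\ \ge\ \eta\,\|\operatorname{grad} f(Z)\|_F,\qquad \eta=\frac{2}{\sqrt{4n^2-2n}},$$ where $\dot R(i,j,0,\alpha)=\frac{\partial}{\partial\phi}R(i,j,\phi,\alpha)\big|_{\phi=0}$.
   Context: $J=J_{2n}=\begin{bmatrix}0&I_n\\-I_n&0\end{bmatrix}$; $A$ is Hamiltonian if $(JA)^H=JA$; $Z$ is symplectic if $Z^HJZ=J$. $f(Z)=\|\operatorname{diag}(Z^HAZ)\|_F^2=\sum_{j}|\langle AZe_j,Ze_j\rangle|^2$ on the manifold $\mathcal{M}$ of unitary symplectic matrices; $\langle X,Y\rangle_{\mathbb{R}}=\operatorname{Re}\operatorname{tr}(X^HY)$; $\operatorname{grad} f(Z)$ is the orthogonal projection of the Euclidean gradient $\big[\partial\tilde f/\partial\operatorname{Re}z_{jk}+\imath\,\partial\tilde f/\partial\operatorname{Im}z_{jk}\big]$ of $\tilde f(Z)=\sum_j|\langle AZe_j,Ze_j\rangle|^2$ onto $T_Z\mathcal{M}=\{ZK: K\text{ skew-Hermitian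 Hamiltonian}\}$. Write $c=\cos\phi$, $s=e^{\imath\alpha}\sin\phi$. All rotations equal $I_{2n}$ except in the listed entries: (R1) for $1\le i\le n$, $j=n+i$ (and $\alpha=0$): $R_{ii}=R_{n+i,n+i}=\cos\phi$, $R_{i,n+i}=-\sin\phi$, $R_{n+i,i}=\sin\phi$. (R2) for $1\le i<j\le n$: $R_{ii}=R_{jj}=R_{n+i,n+i}=R_{n+j,n+j}=c$, $R_{ij}=R_{n+i,n+j}=-s$, $R_{ji}=R_{n+j,n+i}=\bar s$. (R3) for $1\le i\le n$, $n+i<j\le 2n$ (so $i<j-n\le n$): $R_{ii}=R_{j-n,j-n}=R_{n+i,n+i}=R_{jj}=c$, $R_{ij}=-s$, $R_{j-n,n+i}=-\bar s$, $R_{n+i,j-n}=s$, $R_{ji}=\bar s$. Each such $R(i,j,\phi,\alpha)$ is unitary symplectic. *)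

(* Defs.v *)
(* complex numbers are modelled by algC (numClosedFieldType). *)
From HB Require Import structures.
From mathcomp Require Import all_boot all_order all_algebra all_field.
Set Implicit Arguments. Unset Strict Implicit. Unset Printing Implicit Defensive.
Import Order.TTheory GRing.Theory Num.Theory.
Local Open Scope ring_scope.

Definition mxH (m k : nat) (X : 'M[algC]_(m, k)) : 'M[algC]_(k, m) :=
  (map_mx (@Num.conj _) X)^T.

Definition Jmx (n : nat) : 'M[algC]_(n + n) := block_mx 0 1%:M (- 1%:M) 0.

Definition hamiltonian (n : nat) (A : 'M[algC]_(n + n)) : Prop :=
  mxH (Jmx n *m A) = Jmx n *m A.

Definition symplectic (n : nat) (Z : 'M[algC]_(n + n)) : Prop :=
  mxH Z *m Jmx n *m Z = Jmx n.

Definition unitary (n : nat) (Z : 'M[algC]_(n + n)) : Prop :=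
  mxH Z *m Z = 1%:M.

Definition unitary_symplectic n (Z : 'M[algC]_(n + n)) : Prop :=
  unitary Z /\ symplectic Z.

Definition skew_hermitian_hamiltonian n (K : 'M[algC]_(n + n)) : Prop :=
  mxH K = - K /\ hamiltonian K.

Definition rinner (m k : nat) (X Y : 'M[algC]_(m, k)) : algC :=
  'Re (\tr (mxH X *m Y)).

Definition frob (m k : nat) (X : 'M[algC]_(m, k)) : algC :=
  sqrtC (\sum_(i < m) \sum_(j < k) `|X i j| ^+ 2).

(* f~(Z) = sum_j |<A Z e_j, Z e_j>|^2 = sum_j |(Z^H A Z)_jj|^2 *)
Definition ftilde n (A : 'M[algC]_(n + n)) (Z : 'M[algC]_(n + n)) : algC :=
  \sum_(j < n + n) `|(mxH Z *m A *m Z) j j| ^+ 2.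

(* F is polynomial in the entries and their conjugates, so along a real line it
   agrees with a polynomial p; the derivative at 0 is p'(0). *)
Definition is_dir_deriv n (F : 'M[algC]_(n + n) -> algC)
    (Z X : 'M[algC]_(n + n)) (v : algC) : Prop :=
  exists p : {poly algC},
    (forall t : algC, t \is Num.real -> F (Z + t *: X) = p.[t]) /\
    (p^`()).[0] = v.

Definition is_egrad n (F : 'M[algC]_(n + n) -> algC)
    (Z G : 'M[algC]_(n + n)) : Prop :=
  forall j k : 'I_(n + n), exists a b : algC,
    is_dir_deriv F Z (delta_mx j k) a /\
    is_dir_deriv F Z ('i *: delta_mx j k) b /\
    G j k = a + 'i * b.

Definition in_tangent n (Z P : 'M[algC]_(n + n)) : Prop :=
  exists K, skew_hermitian_hamiltonian K /\ P = Z *m K.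

Definition is_tangent_proj n (Z G P : 'M[algC]_(n + n)) : Prop :=
  in_tangent Z P /\
  forall Q, in_tangent Z Q -> rinner (G - P) Q = 0.

(* Rotation kinds, with 0-based indices; pivot pairs:
   RK1 i   : (i, n+i)                      [type (R1)]
   RK2 i j : (i, j), requires i < j         [type (R2)]
   RK3 i j : (i, n+j), requires i < j       [type (R3), j here = paper's j-n] *)
Inductive rot_kind (n : nat) :=
  | RK1 of 'I_n
  | RK2 of 'I_n & 'I_n
  | RK3 of 'I_n & 'I_n.

Definition admissible n (rk : rot_kind n) : bool :=
  match rk with
  | RK1 _ => true
  | RK2 i j => (i < j)%N
  | RK3 i j => (i < j)%N
  end.

Definition at_ (r k a b : nat) : bool := (r == a) && (k == b).

(* Generic pattern: entries listed in (R1)/(R2)/(R3) get c / -s / s / conj s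
   etc., remaining diagonal entries get d, everything else 0.
   The rotation is R(i,j,phi,alpha) = rot_pattern rk 1 (cos phi) (e^{i alpha} sin phi). *)
Definition rot_pattern n (rk : rot_kind n) (d c s : algC) : 'M[algC]_(n + n) :=
  \matrix_(r, k)
   let r := (r : nat) in let k := (k : nat) in
   match rk with
   | RK1 i =>
     let p := (i : nat) in let q := (n + i)%N in
     if at_ r k p p || at_ r k q q then c
     else if at_ r k p q then - s
     else if at_ r k q p then s
     else if r == k then d else 0
   | RK2 i j =>
     let p := (i : nat) in let q := (j : nat) in
     let p' := (n + i)%N in let q' := (n + j)%N in
     if [|| at_ r k p p, at_ r k q q, at_ r k p' p' | at_ r k q' q'] then c
     else if at_ r k p q || at_ r k p' q' then - s
     else if at_ r k q p || at_ r k q' p' then s^*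
     else if r == k then d else 0
   | RK3 i j =>
     let p := (i : nat) in let q := (j : nat) in
     let p' := (n + i)%N in let q' := (n + j)%N in
     if [|| at_ r k p p, at_ r k q q, at_ r k p' p' | at_ r k q' q'] then c
     else if at_ r k p q' then - s
     else if at_ r k q p' then - s^*
     else if at_ r k p' q then s
     else if at_ r k q' p then s^*
     else if r == k then d else 0
   end.

(* The symplectic rotation with c = cos phi, s = e^{i alpha} sin phi. *)
Definition symp_rot n (rk : rot_kind n) (c s : algC) : 'M[algC]_(n + n) :=
  rot_pattern rk 1 c s.

(* d/dphi R(i,j,phi,alpha) at phi = 0, with u = e^{i alpha}:
   since the pattern is linear in (d,c,s), and d(1)/dphi = 0, d(cos)/dphi(0) = 0,
   d(u sin)/dphi(0) = u, the derivative is rot_pattern rk 0 0 u. *)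
Definition rot_dot n (rk : rot_kind n) (u : algC) : 'M[algC]_(n + n) :=
  rot_pattern rk 0 0 u.

Definition eta_const (n : nat) : algC :=
  2 / sqrtC (4 * n%:R ^+ 2 - 2 * n%:R).

(* Main.v *)
Require Import Defs.
From HB Require Import structures.
From mathcomp Require Import all_boot all_order all_algebra all_field zify ring.
Import Order.TTheory GRing.Theory Num.Theory.
Local Open Scope ring_scope.

Lemma conjN (x : algC) : (- x)^* = - x^*. Proof. exact: rmorphN. Qed.
Lemma conjD (x y : algC) : (x + y)^* = x^* + y^*. Proof. exact: rmorphD. Qed.
Lemma conjB (x y : algC) : (x - y)^* = x^* - y^*. Proof. exact: rmorphB. Qed.
Lemma conjM (x y : algC) : (x * y)^* = x^* * y^*. Proof. exact: rmorphM. Qed.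

Lemma mxHE m k (X : 'M[algC]_(m, k)) a b : mxH X a b = (X b a)^*.
Proof. by rewrite !mxE. Qed.

Lemma mxH_mul m k l (X : 'M[algC]_(m, k)) (Y : 'M[algC]_(k, l)) :
  mxH (X *m Y) = mxH Y *m mxH X.
Proof. by rewrite /mxH map_mxM trmx_mul. Qed.

Lemma mxHK m k (X : 'M[algC]_(m, k)) : mxH (mxH X) = X.
Proof. by apply/matrixP => a b; rewrite !mxHE conjCK. Qed.

Lemma mxHD m k (X Y : 'M[algC]_(m, k)) : mxH (X + Y) = mxH X + mxH Y.
Proof. by apply/matrixP => a b; rewrite !mxE rmorphD. Qed.

Lemma mxHB m k (X Y : 'M[algC]_(m, k)) : mxH (X - Y) = mxH X - mxH Y.
Proof. by apply/matrixP => a b; rewrite !mxE rmorphB. Qed.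

Lemma mxHZ m k c (X : 'M[algC]_(m, k)) : mxH (c *: X) = c^* *: mxH X.
Proof. by apply/matrixP => a b; rewrite !mxE rmorphM. Qed.

Lemma sumD1 {I : finType} (j : I) (F : I -> algC) :
  \sum_i F i = F j + \sum_(i | i != j) F i.
Proof. exact: bigD1. Qed.

Lemma deltaE m k (a : 'I_m) (b : 'I_k) i j :
  delta_mx a b i j = ((i == a) && (j == b))%:R :> algC.
Proof. by rewrite /delta_mx mxE. Qed.

Lemma tr_delta m (X : 'M[algC]_m) (a b : 'I_m) : \tr (X *m delta_mx a b) = X b a.
Proof.
rewrite /mxtrace (sumD1 b) big1 ?addr0; last first.
  move=> i /negbTE ne; rewrite mxE big1 // => j _.
  by rewrite deltaE ne andbF mulr0.
rewrite mxE (sumD1 a) big1 ?addr0; last first.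
  by move=> i /negbTE ne; rewrite deltaE ne mulr0.
by rewrite deltaE !eqxx mulr1.
Qed.

Lemma JK_l n (K : 'M[algC]_(n + n)) i c :
  (Jmx n *m K) (lshift n i) c = K (rshift n i) c.
Proof.
rewrite /Jmx -{1}[K]vsubmxK mul_block_col !mul0mx mul1mx add0r col_mxEu.
by rewrite mxE.
Qed.

Lemma JK_h n (K : 'M[algC]_(n + n)) i c :
  (Jmx n *m K) (rshift n i) c = - K (lshift n i) c.
Proof.
rewrite /Jmx -{1}[K]vsubmxK mul_block_col !mul0mx addr0 col_mxEd.
by rewrite mulNmx mul1mx mxE mxE.
Qed.

Lemma ord_split {n} (a : 'I_(n + n)) :
  {i | a = lshift n i} + {i | a = rshift n i}.
Proof.
by rewrite -(splitK a); case: (split a) => i; [left|right]; exists i.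
Qed.

Lemma ssh_entries n (K : 'M[algC]_(n + n)) : skew_hermitian_hamiltonian K ->
  [/\ (forall a b, (K b a)^* = - K a b),
      (forall i j, K (rshift n i) (rshift n j) = K (lshift n i) (lshift n j)) &
      (forall i j, K (rshift n i) (lshift n j) = - K (lshift n i) (rshift n j))].
Proof.
case=> hS hH.
have sk a b : (K b a)^* = - K a b.
  by have := congr1 (fun X : 'M[algC]_(n + n) => X a b) hS; rewrite /= mxHE mxE.
have hm a b := congr1 (fun X : 'M[algC]_(n + n) => X a b) hH.
split => // i j.
  have := hm (lshift n i) (rshift n j); rewrite /= mxHE JK_h JK_l => H.
  by rewrite -H conjN sk opprK.
have := hm (lshift n i) (lshift n j); rewrite /= mxHE !JK_l => H.
by rewrite -H sk.
Qed.

Lemma ssh_of_entries n (K : 'M[algC]_(n + n)) :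
  (forall a b, (K b a)^* = - K a b) ->
  (forall i j, K (rshift n i) (rshift n j) = K (lshift n i) (lshift n j)) ->
  (forall i j, K (rshift n i) (lshift n j) = - K (lshift n i) (rshift n j)) ->
  skew_hermitian_hamiltonian K.
Proof.
move=> sk e1 e2; split.
  by apply/matrixP => a b; rewrite mxHE mxE sk.
apply/matrixP => a b; rewrite mxHE.
have [[i ->]|[i ->]] := ord_split a; have [[j ->]|[j ->]] := ord_split b.
all: by rewrite ?JK_l ?JK_h ?conjN sk ?e1 ?e2 ?opprK.
Qed.

Ltac eqcases :=
  repeat (match goal with |- context [(?a == ?b)%N] =>
    case: (@eqP nat a b) => ?; try (exfalso; lia) end).

Lemma rot1E n (i : 'I_n) u :
  rot_dot (RK1 i) u = - u *: delta_mx (lshift n i) (rshift n i)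
                      + u *: delta_mx (rshift n i) (lshift n i).
Proof.
apply/matrixP => r k; rewrite !mxE -!val_eqE /= /at_.
have := ltn_ord i; move: (nat_of_ord i) (nat_of_ord r) (nat_of_ord k) => a b c ?.
eqcases; rewrite /= ?mulr0 ?mulr1 ?addr0 ?add0r ?mulNr //.
Qed.

Lemma rot2E n (i j : 'I_n) u : (i < j)%N ->
  rot_dot (RK2 i j) u =
    - u *: delta_mx (lshift n i) (lshift n j) - u *: delta_mx (rshift n i) (rshift n j)
    + u^* *: delta_mx (lshift n j) (lshift n i) + u^* *: delta_mx (rshift n j) (rshift n i).
Proof.
move=> lij.
apply/matrixP => r k; rewrite !mxE -!val_eqE /= /at_.
move: lij (ltn_ord i) (ltn_ord j).
move: (nat_of_ord i) (nat_of_ord j) (nat_of_ord r) (nat_of_ord k) => a b c d ? ? ?.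
eqcases; rewrite /= ?mulr0 ?mulr1 ?addr0 ?add0r ?mulNr ?subr0 ?sub0r ?oppr0 ?add0r //.
Qed.

Lemma rot3E n (i j : 'I_n) u : (i < j)%N ->
  rot_dot (RK3 i j) u =
    - u *: delta_mx (lshift n i) (rshift n j) - u^* *: delta_mx (lshift n j) (rshift n i)
    + u *: delta_mx (rshift n i) (lshift n j) + u^* *: delta_mx (rshift n j) (lshift n i).
Proof.
move=> lij.
apply/matrixP => r k; rewrite !mxE -!val_eqE /= /at_.
move: lij (ltn_ord i) (ltn_ord j).
move: (nat_of_ord i) (nat_of_ord j) (nat_of_ord r) (nat_of_ord k) => a b c d ? ? ?.
eqcases; rewrite /= ?mulr0 ?mulr1 ?addr0 ?add0r ?mulNr ?subr0 ?sub0r ?oppr0 ?add0r //.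
Qed.

Lemma trZd n (Y : 'M[algC]_n) c a b : \tr (Y *m (c *: delta_mx a b)) = c * Y b a.
Proof. by rewrite -scalemxAr mxtraceZ tr_delta. Qed.


Lemma conjV (x : algC) : (x^-1)^* = (x^*)^-1. Proof. exact: fmorphV. Qed.

Lemma best_u (x : algC) : exists u, `|u| = 1 /\ u * x^* + u^* * x = 2 * `|x|.
Proof.
have [->|nx] := eqVneq x 0.
  by exists 1; rewrite normr1 normr0 conjC0 !mulr0 addr0.
have nx' : `|x| != 0 by rewrite normr_eq0.
exists (x / `|x|); split; first by rewrite normf_div normr_id mulfV.
have hr : `|x|^* = `|x| by apply: conj_Creal; apply: normr_real.
rewrite conjM conjV hr.
have e : x * x^* = `|x| * `|x| by rewrite -normCK expr2.
transitivity ((x * x^*) / `|x| + (x * x^*) / `|x|); first by ring.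
rewrite e; field; exact: nx'.
Qed.

Lemma Re_abs4 (x : algC) : `|'Re (- 2 * (2 * `|x|))| = 4 * `|x|.
Proof.
have hr : - 2 * (2 * `|x|) \is Num.real.
  by rewrite realM ?realN ?realM ?normr_real // ger0_real.
rewrite (Creal_ReP _ hr) normrM normrN normrM normr_id.
rewrite !normr_nat; ring.
Qed.

Lemma le24 (x : algC) : 2 * `|x| <= 4 * `|x|.
Proof. by rewrite ler_wpM2r // ler_nat. Qed.

Section V.
Variables (n : nat) (K : 'M[algC]_(n + n)).
Hypothesis sk : forall a b, (K b a)^* = - K a b.
Hypothesis e1 : forall i j, K (rshift n i) (rshift n j) = K (lshift n i) (lshift n j).
Hypothesis e2 : forall i j, K (rshift n i) (lshift n j) = - K (lshift n i) (rshift n j).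

Definition T R := \tr (mxH K *m R).

Lemma T1 i : T (rot_dot (RK1 i) 1) = - 2 * K (lshift n i) (rshift n i).
Proof.
rewrite /T rot1E mulmxDr mxtraceD !trZd !mxHE.
have hy : (K (lshift n i) (rshift n i))^* = K (lshift n i) (rshift n i).
  by apply: oppr_inj; rewrite -conjN -e2 sk.
rewrite e2 conjN hy; ring.
Qed.

Lemma T2 (i j : 'I_n) u : (i < j)%N -> T (rot_dot (RK2 i j) u) =
   - 2 * (u * (K (lshift n i) (lshift n j))^* + u^* * K (lshift n i) (lshift n j)).
Proof.
move=> lij; rewrite /T rot2E // !mulmxDr ?mulmxBr ?mulmxN !mxtraceD ?raddfB ?raddfN /= !trZd !mxHE.
rewrite e1 e1 !sk; ring.
Qed.

Lemma T3 (i j : 'I_n) u : (i < j)%N -> T (rot_dot (RK3 i j) u) =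
   - 2 * (u * (K (lshift n i) (rshift n j))^* + u^* * K (lshift n i) (rshift n j)).
Proof.
move=> lij; rewrite /T rot3E // !mulmxDr ?mulmxBr ?mulmxN !mxtraceD ?raddfB ?raddfN /= !trZd !mxHE.
rewrite !e2 ?conjN !sk !e2 ?opprK; ring.
Qed.


Hypothesis hd : forall r, K r r = 0.

Lemma goodE (i j : 'I_n) : exists (rk : rot_kind n) u,
  [/\ admissible rk, `|u| = 1, (if rk is RK1 _ then u = 1 else True) &
      2 * `|K (lshift n i) (lshift n j)| <= `|'Re (T (rot_dot rk u))|].
Proof.
case: (ltngtP i j) => hij.
- have [u [hu hx]] := best_u (K (lshift n i) (lshift n j)).
  exists (RK2 i j), u; split => //.
  by rewrite T2 // [u^* * _]mulrC [_ * u^*]mulrC hx Re_abs4 le24.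
- have [u [hu hx]] := best_u (K (lshift n j) (lshift n i)).
  exists (RK2 j i), u; split => //.
  rewrite T2 // hx Re_abs4.
  have -> : `|K (lshift n i) (lshift n j)| = `|K (lshift n j) (lshift n i)|.
    by rewrite -normrN -sk norm_conjC.
  exact: le24.
- have -> : j = i by apply: val_inj.
  exists (RK1 i), 1; split => //; first by rewrite normr1.
  by rewrite hd normr0 mulr0 normr_ge0.
Qed.

Lemma goodF (i j : 'I_n) : exists (rk : rot_kind n) u,
  [/\ admissible rk, `|u| = 1, (if rk is RK1 _ then u = 1 else True) &
      2 * `|K (lshift n i) (rshift n j)| <= `|'Re (T (rot_dot rk u))|].
Proof.
case: (ltngtP i j) => hij.
- have [u [hu hx]] := best_u (K (lshift n i) (rshift n j)).
  exists (RK3 i j), u; split => //.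
  by rewrite T3 // hx Re_abs4 le24.
- have [u [hu hx]] := best_u (K (lshift n j) (rshift n i)).
  exists (RK3 j i), u; split => //.
  rewrite T3 // hx Re_abs4.
  have -> : `|K (lshift n i) (rshift n j)| = `|K (lshift n j) (rshift n i)|.
    by rewrite -norm_conjC sk e2 opprK.
  exact: le24.
- have -> : j = i by apply: val_inj.
  exists (RK1 i), 1; split => //; first by rewrite normr1.
  rewrite T1 //.
  have hr : K (lshift n i) (rshift n i) \is Num.real.
    rewrite CrealE; apply/eqP; apply: oppr_inj; rewrite -conjN -e2 sk //.
  have hr2 : - 2 * K (lshift n i) (rshift n i) \is Num.real.
    by rewrite realM // realN ger0_real.
  by rewrite (Creal_ReP _ hr2) normrM normrN normr_nat.
Qed.

End V.

Lemma poly_real_eq (p q : {poly algC}) :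
  (forall t, t \is Num.real -> p.[t] = q.[t]) -> p = q.
Proof.
move=> h; apply/eqP; rewrite -subr_eq0; apply/negPn/negP => nz.
set r := p - q in nz.
pose rs : seq algC := [seq i%:R | i <- iota 0 (size r)].
have hall : all (root r) rs.
  apply/allP => x /mapP [i _ ->]; rewrite /root /r hornerD hornerN.
  by rewrite h ?realn // subrr.
have hu : uniq rs.
  rewrite map_inj_uniq ?iota_uniq // => a b /eqP; rewrite eqr_nat => /eqP.
  by [].
by have := max_poly_roots nz hall hu; rewrite size_map size_iota ltnn.
Qed.

Lemma mxaddE m k (X Y : 'M[algC]_(m, k)) a b : (X + Y) a b = X a b + Y a b.
Proof. by rewrite mxE. Qed.
Lemma mxscaleE m k c (X : 'M[algC]_(m, k)) a b : (c *: X) a b = c * X a b.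
Proof. by rewrite mxE. Qed.

Section DD.
Variables (n : nat) (A Z : 'M[algC]_(n + n)).
Let M := mxH Z *m A *m Z.

Lemma dir_deriv_val X v : is_dir_deriv (ftilde A) Z X v ->
  v = \sum_j (M j j * ((mxH X *m A *m Z + mxH Z *m A *m X) j j)^*
             + (mxH X *m A *m Z + mxH Z *m A *m X) j j * (M j j)^*).
Proof.
case=> p [hp hv].
set m1 := fun j => (mxH X *m A *m Z + mxH Z *m A *m X) j j.
set m2 := fun j => (mxH X *m A *m X) j j.
set q := \sum_j ((M j j * (M j j)^*)%:P
   + (M j j * (m1 j)^* + m1 j * (M j j)^*) *: 'X
   + (M j j * (m2 j)^* + m1 j * (m1 j)^* + m2 j * (M j j)^*) *: 'X^2
   + (m1 j * (m2 j)^* + m2 j * (m1 j)^*) *: 'X^3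
   + (m2 j * (m2 j)^*) *: 'X^4).
have pq : p = q.
  apply: poly_real_eq => t ht; rewrite -hp // /ftilde horner_sum.
  apply: eq_bigr => j _.
  have ct : t^* = t by apply: conj_Creal.
  have ew : (mxH (Z + t *: X) *m A *m (Z + t *: X)) j j
          = M j j + t * m1 j + (t * t) * m2 j.
    rewrite mxHD mxHZ ct !mulmxDl !mulmxDr -!scalemxAl -!scalemxAr scalerA.
    by rewrite !mxaddE !mxscaleE /m1 /m2 mxaddE /M; ring.
  rewrite ew normCK !conjD !conjM ct !hornerD !hornerZ hornerC hornerX !hornerXn; ring.
move: hv => <-; rewrite pq horner_coef0 coef_deriv mulr1n /q coef_sum.
apply: eq_bigr => j _.
by rewrite !coefD !coefZ coefC coefX !coefXn /= !mulr0 !mulr1 add0r !addr0.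
Qed.

End DD.

Lemma mxH_delta m k (a : 'I_m) (b : 'I_k) : mxH (delta_mx a b) = delta_mx b a.
Proof.
apply/matrixP => r c; rewrite mxHE !deltaE andbC.
by case: (_ && _); rewrite ?conjC1 ?conjC0.
Qed.

Lemma delta_mulE m k l (a : 'I_m) (b : 'I_k) (B : 'M[algC]_(k, l)) r c :
  (delta_mx a b *m B) r c = (r == a)%:R * B b c.
Proof.
rewrite mxE (sumD1 b) big1 ?addr0 ?deltaE ?eqxx ?andbT //.
by move=> i /negbTE ne; rewrite deltaE ne andbF mul0r.
Qed.

Lemma mul_deltaE m k l (a : 'I_k) (b : 'I_l) (B : 'M[algC]_(m, k)) r c :
  (B *m delta_mx a b) r c = (c == b)%:R * B r a.
Proof.
rewrite mxE (sumD1 a) big1 ?addr0 ?deltaE ?eqxx //=.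
  by rewrite mulrC.
by move=> i /negbTE ne; rewrite deltaE ne mulr0.
Qed.

Section GE.
Variables (n : nat) (A Z : 'M[algC]_(n + n)).
Let M := mxH Z *m A *m Z.

Lemma m1_delta c (j k l : 'I_(n + n)) :
  (mxH (c *: delta_mx j k) *m A *m Z + mxH Z *m A *m (c *: delta_mx j k)) l l
  = (l == k)%:R * (c^* * (A *m Z) j k + c * (mxH Z *m A) k j).
Proof.
rewrite mxHZ mxH_delta -!scalemxAl -scalemxAr mxaddE !mxscaleE -mulmxA.
rewrite delta_mulE mul_deltaE.
by case: eqP => [->|_]; rewrite ?mul0r ?mulr0 ?addr0 //; ring.
Qed.

Lemma dd_delta c (j k : 'I_(n + n)) v :
  is_dir_deriv (ftilde A) Z (c *: delta_mx j k) v ->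
  v = M k k * (c^* * (A *m Z) j k + c * (mxH Z *m A) k j)^*
      + (c^* * (A *m Z) j k + c * (mxH Z *m A) k j) * (M k k)^*.
Proof.
move=> /dir_deriv_val ->.
rewrite (sumD1 k) big1 ?addr0.
  by rewrite !m1_delta eqxx !mul1r.
by move=> l /negbTE ne; rewrite !m1_delta ne !mul0r conjC0 mulr0 add0r.
Qed.

Lemma G_entry G : is_egrad (ftilde A) Z G -> forall j k,
  G j k = 2 * ((A *m Z) j k * (M k k)^* + M k k * ((mxH Z *m A) k j)^*).
Proof.
move=> hG j k; have [a [b [ha [hb ->]]]] := hG j k.
have ha' : is_dir_deriv (ftilde A) Z (1 *: delta_mx j k) a by rewrite scale1r.
rewrite (dd_delta _ _ _ _ ha') (dd_delta _ _ _ _ hb) conjC1 conjCi !conjD !conjM !conjN conjCi conjC1.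
have hi : 'i * 'i = -1 :> algC by rewrite -expr2 sqrCi.
set p := (A *m Z) j k; set q := (mxH Z *m A) k j; set m := M k k.
transitivity (2 * (p * m^* + m * q^*) + ('i * 'i + 1) * (m * p^* - m * q^* - p * m^* + q * m^*)).
  ring.
by rewrite hi addNr mul0r addr0.
Qed.

End GE.

Lemma conj_sum (I : finType) (F : I -> algC) : (\sum_i F i)^* = \sum_i (F i)^*.
Proof. exact: rmorph_sum. Qed.

Lemma Re_sub (x y : algC) : 'Re (x - y) = 'Re x - 'Re y.
Proof. by rewrite !ReE conjB; field. Qed.

Lemma Re_anti (x : algC) : x^* = - x -> 'Re x = 0.
Proof. by move=> h; rewrite ReE h subrr mul0r. Qed.

Lemma rinner_subl m (X Y W : 'M[algC]_m) : rinner (X - Y) W = rinner X W - rinner Y W.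
Proof. by rewrite /rinner mxHB mulmxBl raddfB Re_sub. Qed.

Section DZ.
Variables (n : nat) (K : 'M[algC]_(n + n)).
Definition dK : 'M[algC]_(n + n) := \matrix_(a, b) ((a == b)%:R * K a a).

Lemma mul_dKE (Y : 'M[algC]_(n + n)) a b : (Y *m dK) a b = Y a b * K b b.
Proof.
rewrite mxE (sumD1 b) big1 ?addr0 ?mxE ?eqxx ?mul1r //.
by move=> i /negbTE ne; rewrite mxE ne mul0r mulr0.
Qed.

Lemma tr_dK (Y : 'M[algC]_(n + n)) : \tr (Y *m dK) = \sum_r Y r r * K r r.
Proof. by apply: eq_bigr => r _; rewrite mul_dKE. Qed.

Lemma dK_ssh : skew_hermitian_hamiltonian K -> skew_hermitian_hamiltonian dK.
Proof.
case/ssh_entries => sk e1 e2; apply: ssh_of_entries.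
- move=> a b; rewrite !mxE eq_sym; case: eqP => [->|_].
    by rewrite !mul1r sk.
  by rewrite !mul0r conjC0 oppr0.
- by move=> i j; rewrite !mxE !eq_shift e1.
- by move=> i j; rewrite !mxE !eq_shift !mul0r oppr0.
Qed.
End DZ.
Arguments dK {n}.
Arguments tr_dK {n}.
Arguments mul_dKE {n}.
Arguments dK_ssh {n}.

Lemma mxH_M n (A Z : 'M[algC]_(n + n)) :
  mxH (A *m Z) *m Z = mxH (mxH Z *m A *m Z).
Proof. by rewrite !mxH_mul mxHK mulmxA. Qed.

Lemma rinnerG0 n (A Z G K : 'M[algC]_(n + n)) :
  is_egrad (ftilde A) Z G -> skew_hermitian_hamiltonian K ->
  rinner G (Z *m dK K) = 0.
Proof.
move=> hG hK; case/ssh_entries: hK => sk _ _.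
rewrite /rinner mulmxA tr_dK.
set M := mxH Z *m A *m Z.
have hw r : (mxH G *m Z) r r = 2 * (M r r * (M r r)^* + (M r r)^* * M r r).
  have s1 : \sum_m ((A *m Z) m r)^* * Z m r = (M r r)^*.
    by rewrite -mxHE -mxH_M mxE; apply: eq_bigr => m _; rewrite mxHE.
  have s2 : \sum_m (mxH Z *m A) r m * Z m r = M r r by rewrite /M mxE.
  rewrite mxE; transitivity (\sum_m (2 * (M r r * (((A *m Z) m r)^* * Z m r)
                    + (M r r)^* * ((mxH Z *m A) r m * Z m r)))).
    apply: eq_bigr => m _; rewrite mxHE (G_entry _ _ _ _ hG).
    rewrite !conjM !conjD !conjM !conjCK.
    rewrite conjC1.
    rewrite /M; ring.
  by rewrite -mulr_sumr big_split /= -!mulr_sumr s1 s2.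
apply: Re_anti; rewrite conj_sum -sumrN; apply: eq_bigr => r _.
rewrite hw !conjM !conjD !conjM !conjCK sk.
rewrite ?conjC1.
ring.
Qed.

Lemma rinner_ZZ n (Z K R : 'M[algC]_(n + n)) : mxH Z *m Z = 1%:M ->
  rinner (Z *m K) (Z *m R) = 'Re (\tr (mxH K *m R)).
Proof.
by move=> hu; rewrite /rinner mxH_mul -mulmxA (mulmxA (mxH Z)) hu mul1mx.
Qed.

Lemma diag_zero n (A Z G K : 'M[algC]_(n + n)) :
  mxH Z *m Z = 1%:M -> is_egrad (ftilde A) Z G -> skew_hermitian_hamiltonian K ->
  (forall Q, in_tangent Z Q -> rinner (G - Z *m K) Q = 0) ->
  forall r, K r r = 0.
Proof.
move=> hu hG hK hpr.
have h := hpr (Z *m dK K) (ex_intro _ (dK K) (conj (dK_ssh K hK) erefl)).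
rewrite rinner_subl (rinnerG0 _ _ _ _ _ hG hK) sub0r rinner_ZZ // tr_dK in h.
have e : \sum_r mxH K r r * K r r = \sum_r `|K r r| ^+ 2.
  by apply: eq_bigr => r _; rewrite mxHE normCK mulrC.
have ge : 0 <= \sum_r `|K r r| ^+ 2 by apply: sumr_ge0 => r _; apply: exprn_ge0.
move: h; rewrite e (Creal_ReP _ (ger0_real ge)) => /eqP; rewrite oppr_eq0 => /eqP h0.
have hh := psumr_eq0P (P := predT) (fun i _ => exprn_ge0 2 (normr_ge0 (K i i))) h0.
move=> r; have := @hh r isT.
by move/eqP; rewrite sqrf_eq0 normr_eq0 => /eqP.
Qed.

Lemma seq_max (T : eqType) (f : T -> algC) (hf : forall x, 0 <= f x) (s : seq T) x0 :
  exists2 x, x \in x0 :: s & forall y, y \in x0 :: s -> f y <= f x.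
Proof.
elim: s x0 => [|a s IH] x0.
  by exists x0; rewrite ?mem_head // => y; rewrite inE => /eqP ->.
have [x xin hx] := IH a.
have := real_leVge (ger0_real (hf x0)) (ger0_real (hf x)); case/orP => h.
- exists x; first by rewrite inE xin orbT.
  move=> y; rewrite inE => /orP [/eqP -> //|]; exact: hx.
- exists x0; first exact: mem_head.
  move=> y; rewrite inE => /orP [/eqP -> //|/hx hy]; exact: le_trans hy h.
Qed.

Lemma fin_max (T : finType) (x0 : T) (f : T -> algC) (hf : forall x, 0 <= f x) :
  exists x, forall y, f y <= f x.
Proof.
have [x _ hx] := @seq_max T f hf (enum T) x0.
by exists x => y; apply: hx; rewrite inE mem_enum orbT.
Qed.

Lemma sumsq_tr m (X : 'M[algC]_m) :
  \sum_i \sum_j `|X i j| ^+ 2 = \tr (mxH X *m X).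
Proof.
rewrite exchange_big; apply: eq_bigr => j _; rewrite mxE.
by apply: eq_bigr => i _; rewrite mxHE normCK mulrC.
Qed.

Lemma frob_ZK n (Z K : 'M[algC]_(n + n)) : mxH Z *m Z = 1%:M ->
  frob (Z *m K) = sqrtC (\sum_i \sum_j `|K i j| ^+ 2).
Proof.
move=> hu; rewrite /frob !sumsq_tr mxH_mul -mulmxA (mulmxA (mxH Z)) hu mul1mx //.
Qed.

Lemma row_bound m (K : 'M[algC]_m) (Mx : algC) i :
  K i i = 0 -> (forall j, `|K i j| <= Mx) ->
  \sum_j `|K i j| ^+ 2 <= (m%:R - 1) * Mx ^+ 2.
Proof.
move=> h0 hb.
have hM : 0 <= Mx by apply: le_trans (hb i); apply: normr_ge0.
apply: (@le_trans _ _ (\sum_j (1 - (j == i)%:R) * Mx ^+ 2)).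
  apply: ler_sum => j _; case: eqP => [->|_].
    by rewrite h0 normr0 expr0n /= subrr mul0r.
  by rewrite subr0 mul1r; apply: lerXn2r; rewrite ?nnegrE ?normr_ge0.
have e1 : \sum_(j < m) ((j == i)%:R : algC) = 1.
  rewrite (sumD1 i) big1 ?addr0 ?eqxx //.
  by move=> j /negbTE ->.
have e2 : \sum_(j < m) (1 : algC) = m%:R by rewrite sumr_const card_ord.
by rewrite -mulr_suml sumrB e1 e2.
Qed.

Lemma eta_bound n (S Mx : algC) : (1 <= n)%N -> 0 <= S -> 0 <= Mx ->
  S <= (n + n)%:R * (((n + n)%:R - 1) * Mx ^+ 2) ->
  eta_const n * sqrtC S <= 2 * Mx.
Proof.
move=> hn hS hM hle.
set N : algC := (n + n)%:R * ((n + n)%:R - 1).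
have eN : 4 * n%:R ^+ 2 - 2 * n%:R = N by rewrite /N natrD; ring.
have N0 : 0 < N.
  have -> : N = ((n + n) * (n + n - 1))%:R by rewrite natrM natrB //; lia.
  by rewrite ltr0n; nia.
have sN : 0 < sqrtC N by rewrite sqrtC_gt0.
have hS' : sqrtC S <= sqrtC N * Mx.
  have N0' : 0 <= N by apply: ltW.
  rewrite -(sqrCK hM) -sqrtCM ?nnegrE ?exprn_ge0 //.
  have hN2 : 0 <= N * Mx ^+ 2 by rewrite mulr_ge0 // exprn_ge0.
  rewrite ler_sqrtC ?nnegrE //.
  by move: hle; rewrite /N mulrA.
rewrite /eta_const eN.
apply: (@le_trans _ _ (2 / sqrtC N * (sqrtC N * Mx))).
  by rewrite ler_wpM2l // divr_ge0 ?ler0n // ltW.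
rewrite mulrA -(mulrA 2) mulVf ?mulr1 //; exact: lt0r_neq0.
Qed.

Theorem lemma4p3 (n : nat) (hn : (1 <= n)%N) (A : 'M[algC]_(n + n))
    (hA : hamiltonian A) (Z : 'M[algC]_(n + n)) (hZ : unitary_symplectic Z)
    (G P : 'M[algC]_(n + n)) (hG : is_egrad (ftilde A) Z G)
    (hP : is_tangent_proj Z G P) :
  exists (rk : rot_kind n) (u : algC),
    [/\ admissible rk, `|u| = 1,
        (if rk is RK1 _ then u = 1 else True) &
        eta_const n * frob P <= `|rinner P (Z *m rot_dot rk u)| ].
Proof.
case: hZ => hu _.
case: hP => [[K [hK eP]] hpr]; subst P.
have hd := diag_zero _ _ _ _ _ hu hG hK hpr.
have [sk e1 e2] := ssh_entries _ _ hK.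
pose o : 'I_(n + n) := lshift n (Ordinal hn).
have [[r0 k0] hmax] := @fin_max _ (o, o) (fun p => `|K p.1 p.2|) (fun p => normr_ge0 _).
set Mx := `|K r0 k0| in hmax.
have hb i j : `|K i j| <= Mx := hmax (i, j).
have [rk [u [h1 h2 h3 h4]]] : exists (rk : rot_kind n) u,
  [/\ admissible rk, `|u| = 1, (if rk is RK1 _ then u = 1 else True) &
      2 * Mx <= `|'Re (T n K (rot_dot rk u))|].
  rewrite /Mx.
  case: (ord_split r0) => [[i ->]|[i ->]]; case: (ord_split k0) => [[j ->]|[j ->]].
  - by apply: goodE.
  - by apply: goodF.
  - by rewrite e2 normrN; apply: goodF.
  - by rewrite e1; apply: goodE.
exists rk, u; split => //.
rewrite rinner_ZZ // (frob_ZK _ _ _ hu).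
apply: le_trans h4.
have hM : 0 <= Mx by apply: normr_ge0.
apply: eta_bound => //.
  by apply: sumr_ge0 => i _; apply: sumr_ge0 => j _; apply: exprn_ge0.
apply: (@le_trans _ _ (\sum_(i < n + n) ((n + n)%:R - 1) * Mx ^+ 2)).
  by apply: ler_sum => i _; apply: row_bound.
by rewrite sumr_const card_ord mulr_natl.
Qed.
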